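(* Let $\phi$ be the real root of $x^3=x^2+x+1$. For each integer $n\ge 4$, there exists an integer sequence $\langle a_i\rangle_{i=1}^n$ with $a_i=a_{i-1}+a_{i-2}+a_{i-3}$ for $4\le i\le n$, $a_n=0$, $a_1>0$, $a_2\le 0$, $a_3<0$ and $a_1<0.81\phi^{n/2}$. Similarly, for each integer $n\ge 4$ there exists an integer sequence $\langle b_i\rangle_{i=1}^n$ with $b_i=b_{i-1}+b_{i-2}+b_{i-3}$ for $4\le i\le n$, $b_n=0$, $b_2>0$, $b_1\le 0$, $b_3<0$ and $b_2<0.64\phi^{n/2}$. *)

(* Defs.v *)
From Stdlib Require Import Reals ZArith.
Open Scope R_scope.

(* phi is a real root of x^3 = x^2 + x + 1 (the cubic has exactly one real root,
   the tribonacci constant). *)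
Definition is_trib_root (phi : R) : Prop := phi ^ 3 = phi ^ 2 + phi + 1.

Definition trib_rec (a : nat -> Z) (n : nat) : Prop :=
  forall i : nat, (4 <= i <= n)%nat ->
    a i = (a (i - 1)%nat + a (i - 2)%nat + a (i - 3)%nat)%Z.

(* Main.v *)
Require Import Defs.
From Stdlib Require Import Reals ZArith Lra Lia Psatz.
Open Scope R_scope.

Lemma cubic_red (phi K X Y : R) : is_trib_root phi ->
  X - Y = K * (phi^3 - phi^2 - phi - 1) -> X = Y.
Proof.
  unfold is_trib_root; intros h E; rewrite h in E.
  replace (phi ^ 2 + phi + 1 - phi ^ 2 - phi - 1) with 0 in E by ring. lra.
Qed.

Fixpoint s (k : nat) : Z :=
  match k with
  | S ((S ((S j) as k2)) as k1) => (s j - s k2 - s k1)%Z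
  | 2%nat => 1%Z
  | _ => 0%Z
  end.

Lemma s_rec (k : nat) : s (S (S (S k))) = (s k - s (S k) - s (S (S k)))%Z.
Proof. reflexivity. Qed.

Lemma s_recR (k : nat) : IZR (s (S (S (S k)))) = IZR (s k) - IZR (s (S k)) - IZR (s (S (S k))).
Proof. rewrite s_rec, !minus_IZR. reflexivity. Qed.

Definition Lf (phi a b c : R) := phi*a + (phi^2-phi)*b + c.
Definition Qf (phi a b c : R) :=
  (a - phi^2*c)^2 + (phi^2-1)*(b - phi*c)^2 - (1+phi)*(a-phi^2*c)*(b-phi*c).

Lemma L_s (phi : R) (h : is_trib_root phi) (m : nat) :
  Lf phi (IZR (s m)) (IZR (s (S m))) (IZR (s (S (S m)))) = / phi ^ m.
Proof.
  assert (hp : 0 < phi) by (unfold is_trib_root in h; nra).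
  induction m as [|m IH].
  - unfold Lf; simpl. field.
  - rewrite s_recR.
    set (a := IZR (s m)) in *; set (b := IZR (s (S m))) in *; set (c := IZR (s (S (S m)))) in *.
    assert (E : phi * Lf phi b c (a - b - c) = Lf phi a b c).
    { apply (cubic_red phi c); [exact h| unfold Lf; ring]. }
    rewrite IH in E. simpl.
    apply (Rmult_eq_reg_l phi); [| lra]. rewrite E. field. repeat split; try apply pow_nonzero; lra.
Qed.

Lemma Q_s (phi : R) (h : is_trib_root phi) (m : nat) :
  Qf phi (IZR (s m)) (IZR (s (S m))) (IZR (s (S (S m)))) = phi ^ (S m).
Proof.
  induction m as [|m IH].
  - unfold Qf; simpl. apply (cubic_red phi phi); [exact h| ring].
  - rewrite s_recR.
    set (a := IZR (s m)) in *; set (b := IZR (s (S m))) in *; set (c := IZR (s (S (S m)))) in *.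
    assert (E : Qf phi b c (a - b - c) = phi * Qf phi a b c).
    { apply (cubic_red phi ((1)*c^2 + (1)*c^2*phi + (-1)*c^2*phi^2 + (1)*b*c + (3)*b*c*phi + (-1)*b^2 + (1)*b^2*phi + (-2)*a*c*phi + (-2)*a*b*phi + (1)*a^2*phi)); [exact h| unfold Qf; ring]. }
    rewrite E, IH. simpl. ring.
Qed.

Definition kap phi := 2*phi^3 - phi^2 + 1.
Definition rho phi f1 f2 f3 := (f1*phi^2 + f2*phi + f3) / kap phi.
Definition alp phi f1 f2 f3 := f1 - rho phi f1 f2 f3 * phi.
Definition bet phi f1 f2 f3 := f2 - rho phi f1 f2 f3 * (phi^2 - phi).
Definition hh phi := (1+phi)/2.
Definition betp phi f1 f2 f3 := bet phi f1 f2 f3 + alp phi f1 f2 f3 * hh phi.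
Definition DD phi := phi^2 - 1 - hh phi ^2.

Lemma fbound (phi a b c f1 f2 f3 K RR : R) :
  1 < phi -> 0 < DD phi ->
  alp phi f1 f2 f3 ^2 + betp phi f1 f2 f3 ^2 / DD phi <= K -> rho phi f1 f2 f3 ^2 <= RR ->
  (f1*a + f2*b + f3*c)^2 <= 11/10 * K * Qf phi a b c + 11 * RR * (Lf phi a b c)^2.
Proof.
  intros hp hD hK hR.
  assert (hk : 0 < kap phi) by (unfold kap; nra).
  assert (E1 : f1*a + f2*b + f3*c = (alp phi f1 f2 f3*((a - phi^2*c) - hh phi * (b - phi*c)) + betp phi f1 f2 f3*(b - phi*c)) + rho phi f1 f2 f3 * Lf phi a b c).
  { unfold betp, bet, alp, rho, Lf, hh. unfold kap in *. field. lra. }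
  assert (E2 : Qf phi a b c = ((a - phi^2*c) - hh phi * (b - phi*c))^2 + DD phi*(b - phi*c)^2).
  { unfold Qf, DD, hh. field. }
  set (x := a - phi^2*c) in *; set (y := b - phi*c) in *; set (w := x - hh phi * y) in *.
  set (al := alp phi f1 f2 f3) in *; set (bp := betp phi f1 f2 f3) in *; set (r := rho phi f1 f2 f3) in *.
  set (D := DD phi) in *.
  assert (CS : (al*w + bp*y)^2 <= (al^2 + bp^2/D) * (w^2 + D*y^2)).
  { assert (Hsq : (al^2 + bp^2/D) * (w^2 + D*y^2) - (al*w + bp*y)^2 = (bp*w - al*D*y)^2 / D) by (field; lra).
    assert (0 <= (bp*w - al*D*y)^2 / D) by (unfold Rdiv; apply Rmult_le_pos; [apply pow2_ge_0| apply Rlt_le, Rinv_0_lt_compat; exact hD]). lra. }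
  assert (hQ : 0 <= w^2 + D*y^2) by nra.
  assert (Sp : forall u v : R, (u+v)^2 <= 11/10*u^2 + 11*v^2) by (intros u v; assert (0 <= (u - 10*v)^2) by apply pow2_ge_0; nra).
  rewrite E1, E2.
  eapply Rle_trans; [apply Sp|].
  set (LL := Lf phi a b c).
  assert (0 <= LL^2) by nra.
  apply Rplus_le_compat.
  - assert ((al^2 + bp^2/D) * (w^2 + D*y^2) <= K * (w^2 + D*y^2)) by (apply Rmult_le_compat_r; lra).
    nra.
  - assert (r^2 * LL^2 <= RR * LL^2) by (apply Rmult_le_compat_r; lra).
    replace ((r*LL)^2) with (r^2*LL^2) by ring. lra.
Qed.

Lemma div_bounds (n k lo hi : R) : 0 < k -> lo * k <= n -> n <= hi * k -> lo <= n / k <= hi.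
Proof.
  intros hk h1 h2. split.
  - apply (Rmult_le_reg_r k); [lra|]. unfold Rdiv. rewrite Rmult_assoc, Rinv_l by lra. lra.
  - apply (Rmult_le_reg_r k); [lra|]. unfold Rdiv. rewrite Rmult_assoc, Rinv_l by lra. lra.
Qed.

Lemma sq_bound (x l h M : R) : l <= x <= h -> l*l <= M -> h*h <= M -> x^2 <= M.
Proof. intros [h1 h2] hl hh'. destruct (Rle_lt_dec 0 x); nra. Qed.

Lemma sqdiv_bound (x l h D D0 M : R) : l <= x <= h -> 0 < D0 <= D -> l*l <= M*D0 -> h*h <= M*D0 -> x^2/D <= M.
Proof.
  intros hx [hD0 hD] h1 h2.
  assert (x^2 <= M*D0) by (apply (sq_bound x l h); assumption).
  apply (Rmult_le_reg_r D); [lra|]. unfold Rdiv. rewrite Rmult_assoc, Rinv_l by lra.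
  assert (0 <= M) by (assert (0 <= x^2) by apply pow2_ge_0; nra). nra.
Qed.

Ltac numtac phi H rl rh al ah bl bh MA MB :=
  destruct H as [h1 h2];
  assert (p2 : 33826/10000 < phi^2 < 33831/10000) by (split; nra);
  assert (p3 : 62213/10000 < phi^3 < 62229/10000) by (split; nra);
  assert (hk : 0 < kap phi) by (unfold kap; lra);
  assert (hD : 36/100 <= DD phi) by (unfold DD, hh; lra);
  match goal with |- context [rho phi ?x ?y ?z] =>
    assert (hr : rl <= rho phi x y z <= rh) by (unfold rho; apply div_bounds; [exact hk| unfold kap; lra | unfold kap; lra]);
    assert (ha : al <= alp phi x y z <= ah) by (unfold alp; split; nra);
    assert (hb : bl <= betp phi x y z <= bh) by (unfold betp, bet, hh; split; nra);
    assert (hA : alp phi x y z ^2 <= MA) by (apply (sq_bound _ al ah); [exact ha| lra| lra]);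
    assert (hB : betp phi x y z ^2 / DD phi <= MB) by (apply (sqdiv_bound _ bl bh _ (36/100)); [exact hb| lra| lra| lra]);
    split; [lra| split; [lra | apply (sq_bound _ rl rh); [exact hr| lra| lra]]]
  end.
Definition cA (u v a b c : R) := let d := a - b - c in
  (u+v)*a + v*b < 0 /\ (u+v)*b + v*c <= 0 /\ 0 < (u+v)*c + v*d.
Definition cB (u v a b c : R) := let d := a - b - c in
  (u+v)*a + v*b < 0 /\ 0 < (u+v)*b + v*c /\ (u+v)*c + v*d <= 0.

Ltac cover_tac a b c :=
  intros H1 H2; unfold cA, cB;
  destruct (Rle_lt_dec 0 a); destruct (Rle_lt_dec 0 b);
  destruct (Rle_lt_dec 0 (c + 18393/10000*a + 15437/10000*b));
  repeat first [rewrite Rabs_pos_eq in * by lra | rewrite Rabs_left in * by lra];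
  lra.

Lemma cover_A (a b c : R) :
  1 <= Rabs a + Rabs b ->
  Rabs (c + 18393/10000*a + 15437/10000*b) <= 1/20 * (Rabs a + Rabs b) ->
  cA 1 0 a b c \/ cA (-1) 0 a b c \/ cA 0 1 a b c \/ cA 0 (-1) a b c \/
  cA 1 1 a b c \/ cA (-1) (-1) a b c \/ cA 1 (-1) a b c \/ cA (-1) 1 a b c.
Proof. cover_tac a b c. Qed.

Lemma cover_B (a b c : R) :
  1 <= Rabs a + Rabs b ->
  Rabs (c + 18393/10000*a + 15437/10000*b) <= 1/20 * (Rabs a + Rabs b) ->
  cB 1 0 a b c \/ cB (-1) 0 a b c \/ cB 0 1 a b c \/ cB 0 (-1) a b c \/
  cB 1 1 a b c \/ cB (-1) (-1) a b c \/ cB 1 (-1) a b c \/ cB (-1) 1 a b c.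
Proof. cover_tac a b c. Qed.

Lemma eps_bound (L e1 e2 a b c : R) :
  c + 18393/10000*a + 15437/10000*b = L - e1*a - e2*b -> Rabs L <= 1/21 ->
  Rabs e1 <= 4/10000 -> Rabs e2 <= 4/10000 -> 1 <= Rabs a + Rabs b ->
  Rabs (c + 18393/10000*a + 15437/10000*b) <= 1/20 * (Rabs a + Rabs b).
Proof.
  intros E hL h1 h2 hab. rewrite E.
  assert (T : Rabs (L - e1*a - e2*b) <= Rabs L + Rabs (e1*a) + Rabs (e2*b)).
  { unfold Rminus. eapply Rle_trans; [apply Rabs_triang|]. rewrite Rabs_Ropp.
    apply Rplus_le_compat_r. eapply Rle_trans; [apply Rabs_triang|]. rewrite Rabs_Ropp. lra. }
  rewrite !Rabs_mult in T.
  assert (Rabs e1 * Rabs a <= 4/10000 * Rabs a) by (apply Rmult_le_compat_r; [apply Rabs_pos|lra]).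
  assert (Rabs e2 * Rabs b <= 4/10000 * Rabs b) by (apply Rmult_le_compat_r; [apply Rabs_pos|lra]).
  lra.
Qed.

Lemma IZR_abs_ge1 (z : Z) : z <> 0%Z -> 1 <= Rabs (IZR z).
Proof.
  intro hz. rewrite <- abs_IZR. apply IZR_le. lia.
Qed.

Lemma Rpow_facts (phi : R) (n : nat) : 0 < phi ->
  0 < Rpower phi (INR n / 2) /\ Rpower phi (INR n / 2) ^ 2 = phi ^ n.
Proof.
  intro hp. split.
  - unfold Rpower. apply exp_pos.
  - rewrite <- (Rpower_pow n phi hp). simpl. rewrite Rmult_1_r, <- Rpower_plus. f_equal. field.
Qed.

Lemma lt_from_sq (x X k : R) : 0 < X -> 0 < k -> x^2 < k^2 * X^2 -> x < k * X.
Proof.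
  intros hX hk h. destruct (Rle_lt_dec x 0).
  - nra.
  - apply Rnot_le_lt. intro H. assert (k*X <= x) by lra.
    assert ((k*X)^2 <= x^2) by (apply pow_incr; nra). nra.
Qed.

Definition seqB (u v : Z) (n i : nat) : Z := ((u + v) * s (n - i) + v * s (S (n - i)))%Z.

Lemma seqB_rec (u v : Z) (n : nat) : trib_rec (seqB u v n) n.
Proof.
  intros i Hi. unfold seqB.
  replace (n - (i - 1))%nat with (S (n - i)) by lia.
  replace (n - (i - 2))%nat with (S (S (n - i))) by lia.
  replace (n - (i - 3))%nat with (S (S (S (n - i)))) by lia.
  set (k := (n - i)%nat).
  assert (Hs : forall j, s j = (s (S j) + s (S (S j)) + s (S (S (S j))))%Z).
  { intro j. rewrite (s_rec j). lia. }
  rewrite (Hs k). rewrite (Hs (S k)). ring.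
Qed.

Lemma seqB_n (u v : Z) (n : nat) : seqB u v n n = 0%Z.
Proof. unfold seqB. rewrite Nat.sub_diag. simpl. ring. Qed.

Lemma phi_bounds (phi : R) : is_trib_root phi -> 18392/10000 < phi < 18393/10000.
Proof.
  unfold is_trib_root; intro h.
  assert (0 < phi) by nra.
  split; nra.
Qed.

Lemma big_facts (phi : R) (h : is_trib_root phi) (m : nat) : (5 <= m)%nat ->
  21 <= phi ^ m /\ 38 <= phi ^ (S m).
Proof.
  intro hm. destruct (phi_bounds phi h) as [h1 h2].
  assert (A : (18392/10000)^5 <= phi^5) by (apply pow_incr; lra).
  assert (B : (18392/10000)^6 <= phi^6) by (apply pow_incr; lra).
  assert (C : phi^5 <= phi^m) by (apply Rle_pow; [lra|exact hm]).
  assert (D : phi^6 <= phi^(S m)) by (apply Rle_pow; [lra|lia]).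
  simpl in A, B. split; lra.
Qed.

Lemma IZR_lin (u v x y : Z) : IZR ((u+v)*x + v*y) = (IZR u + IZR v)*IZR x + IZR v * IZR y.
Proof. rewrite plus_IZR, !mult_IZR, plus_IZR. reflexivity. Qed.

Lemma finish_common (phi : R) (h : is_trib_root phi) (m : nat) (hm : (5 <= m)%nat)
  (f1 f2 f3 K RR Z : R) :
  (0 < DD phi /\ alp phi f1 f2 f3 ^2 + betp phi f1 f2 f3 ^2 / DD phi <= K /\ rho phi f1 f2 f3 ^2 <= RR) ->
  0 <= K -> 0 <= RR ->
  11/10 * K * 38 + 11 * RR * (1/441) < Z * 33826/10000 * 38 ->
  11/10 * K < Z * 33826/10000 ->
  (f1*IZR (s m) + f2*IZR (s (S m)) + f3*IZR (s (S (S m))))^2 < Z * phi^(S (S (S m))).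
Proof.
  intros [hD [hK hR]] hK0 hR0 hZ hZ2.
  destruct (phi_bounds phi h) as [h1 h2].
  destruct (big_facts phi h m hm) as [hm1 hm2].
  eapply Rle_lt_trans; [apply (fbound phi _ _ _ f1 f2 f3 K RR); [lra|exact hD|exact hK|exact hR]|].
  rewrite (Q_s phi h m), (L_s phi h m).
  assert (E : phi^(S (S (S m))) = phi^(S m) * phi^2) by (simpl; ring).
  rewrite E.
  assert (p2 : 33826/10000 < phi^2) by nra.
  assert (hi : 0 < / phi^m <= 1/21).
  { split. apply Rinv_0_lt_compat; lra.
    assert (/ phi^m <= / 21) by (apply Rinv_le_contravar; lra). lra. }
  assert (hi2 : (/ phi^m)^2 <= 1/441) by nra.
  set (P := phi^(S m)) in *.
  assert (0 <= Z) by lra.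
  set (W := (/ phi^m)^2) in *.
  assert (0 <= W) by (unfold W; apply pow2_ge_0).
  assert (T1 : 11 * RR * W <= 11 * RR * (1/441)) by (apply Rmult_le_compat_l; lra).
  assert (T2 : Z * P * (33826/10000) <= Z * (P * phi^2)).
  { rewrite <- Rmult_assoc. apply Rmult_le_compat_l; [|lra]. apply Rmult_le_pos; lra. }
  assert (T3 : 0 <= (Z * 33826/10000 - 11/10*K) * (P - 38)) by (apply Rmult_le_pos; lra).
  nra.
Qed.

Definition numA (phi f1 f2 f3 : R) :=
  0 < DD phi /\ alp phi f1 f2 f3 ^2 + betp phi f1 f2 f3 ^2 / DD phi <= 19/10 /\ rho phi f1 f2 f3 ^2 <= 1/10.
Definition numB (phi f1 f2 f3 : R) :=
  0 < DD phi /\ alp phi f1 f2 f3 ^2 + betp phi f1 f2 f3 ^2 / DD phi <= 6/5 /\ rho phi f1 f2 f3 ^2 <= 1/4.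

Lemma numA_c (phi : R) : 18392/10000 < phi < 18393/10000 -> numA phi (0) (0) (1).
Proof. intro H; unfold numA; numtac phi H (99/1000) (499/5000) (-1837/10000) (-1819/10000) (-83/200) (-4109/10000) (339/10000) (2393/5000). Qed.

Lemma numA_amb (phi : R) : 18392/10000 < phi < 18393/10000 -> numA phi (1) (-1) (0).
Proof. intro H; unfold numA; numtac phi H (1531/10000) (769/5000) (717/1000) (3593/5000) (-2197/10000) (-27/125) (1033/2000) (671/5000). Qed.

Lemma numA_ambpc (phi : R) : 18392/10000 < phi < 18393/10000 -> numA phi (1) (-1) (1).
Proof. intro H; unfold numA; numtac phi H (101/400) (633/2500) (5341/10000) (2679/5000) (-6329/10000) (-6289/10000) (359/1250) (1391/1250). Qed.

Lemma numA_ambmc (phi : R) : 18392/10000 < phi < 18393/10000 -> numA phi (1) (-1) (-1).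
Proof. intro H; unfold numA; numtac phi H (537/10000) (34/625) (4499/5000) (4507/5000) (483/2500) (1969/10000) (8127/10000) (539/5000). Qed.

Lemma numB_b (phi : R) : 18392/10000 < phi < 18393/10000 -> numB phi (0) (1) (0).
Proof. intro H; unfold numB; numtac phi H (73/400) (229/1250) (-3371/10000) (-671/2000) (149/625) (1211/5000) (569/5000) (1631/10000). Qed.

Lemma numB_bpc (phi : R) : 18392/10000 < phi < 18393/10000 -> numB phi (0) (1) (1).
Proof. intro H; unfold numB; numtac phi H (1409/5000) (1413/5000) (-5199/10000) (-5181/10000) (-349/2000) (-851/5000) (169/625) (847/10000). Qed.

Lemma numB_tbpc (phi : R) : 18392/10000 < phi < 18393/10000 -> numB phi (0) (2) (1).
Proof. intro H; unfold numB; numtac phi H (2323/5000) (2327/5000) (-4281/5000) (-8543/10000) (329/5000) (44/625) (1833/2500) (139/10000). Qed.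

Lemma numB_c (phi : R) : 18392/10000 < phi < 18393/10000 -> numB phi (0) (0) (1).
Proof. intro H; unfold numB; numtac phi H (99/1000) (499/5000) (-1837/10000) (-1819/10000) (-83/200) (-4109/10000) (339/10000) (2393/5000). Qed.

Lemma finishA (phi : R) (h : is_trib_root phi) (m : nat) (hm : (5 <= m)%nat) (u v : Z) (f1 f2 f3 sg : R) :
  cA (IZR u) (IZR v) (IZR (s m)) (IZR (s (S m))) (IZR (s (S (S m)))) ->
  (forall a b c, (IZR u + IZR v)*c + IZR v*(a-b-c) = sg*(f1*a+f2*b+f3*c)) -> sg^2 = 1 ->
  numA phi f1 f2 f3 ->
  ((u+v)*s m + v*s (S m) < 0)%Z /\ ((u+v)*s (S m) + v*s (S (S m)) <= 0)%Z /\
  (0 < (u+v)*s (S (S m)) + v*s (S (S (S m))))%Z /\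
  IZR ((u+v)*s (S (S m)) + v*s (S (S (S m))))^2 < 6561/10000 * phi^(S (S (S m))).
Proof.
  intros HA Ef Hsg Hn. unfold cA in HA. destruct HA as [H1 [H2 H3]].
  rewrite <- s_recR in H3.
  split; [apply lt_IZR; rewrite IZR_lin; exact H1|].
  split; [apply le_IZR; rewrite IZR_lin; exact H2|].
  split; [apply lt_IZR; rewrite IZR_lin; exact H3|].
  rewrite IZR_lin, s_recR, (Ef (IZR (s m)) (IZR (s (S m))) (IZR (s (S (S m))))).
  replace ((sg * (f1 * IZR (s m) + f2 * IZR (s (S m)) + f3 * IZR (s (S (S m))))) ^ 2)
    with ((f1 * IZR (s m) + f2 * IZR (s (S m)) + f3 * IZR (s (S (S m)))) ^ 2)
    by (rewrite Rpow_mult_distr, Hsg; ring).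
  apply (finish_common phi h m hm f1 f2 f3 (19/10) (1/10)); [exact Hn|lra|lra|lra|lra].
Qed.

Lemma finishB (phi : R) (h : is_trib_root phi) (m : nat) (hm : (5 <= m)%nat) (u v : Z) (f1 f2 f3 sg : R) :
  cB (IZR u) (IZR v) (IZR (s m)) (IZR (s (S m))) (IZR (s (S (S m)))) ->
  (forall a b c, (IZR u + IZR v)*b + IZR v*c = sg*(f1*a+f2*b+f3*c)) -> sg^2 = 1 ->
  numB phi f1 f2 f3 ->
  ((u+v)*s m + v*s (S m) < 0)%Z /\ (0 < (u+v)*s (S m) + v*s (S (S m)))%Z /\
  ((u+v)*s (S (S m)) + v*s (S (S (S m))) <= 0)%Z /\
  IZR ((u+v)*s (S m) + v*s (S (S m)))^2 < 4096/10000 * phi^(S (S (S m))).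
Proof.
  intros HB Ef Hsg Hn. unfold cB in HB. destruct HB as [H1 [H2 H3]].
  rewrite <- s_recR in H3.
  split; [apply lt_IZR; rewrite IZR_lin; exact H1|].
  split; [apply lt_IZR; rewrite IZR_lin; exact H2|].
  split; [apply le_IZR; rewrite IZR_lin; exact H3|].
  rewrite IZR_lin, (Ef (IZR (s m)) (IZR (s (S m))) (IZR (s (S (S m))))).
  replace ((sg * (f1 * IZR (s m) + f2 * IZR (s (S m)) + f3 * IZR (s (S (S m))))) ^ 2)
    with ((f1 * IZR (s m) + f2 * IZR (s (S m)) + f3 * IZR (s (S (S m)))) ^ 2)
    by (rewrite Rpow_mult_distr, Hsg; ring).
  apply (finish_common phi h m hm f1 f2 f3 (6/5) (1/4)); [exact Hn|lra|lra|lra|lra].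
Qed.

Lemma packA (phi : R) (hp : 0 < phi) (n m : nat) (u v X1 : Z) : n = S (S (S m)) ->
  X1 = ((u+v)*s (S (S m)) + v*s (S (S (S m))))%Z ->
  ((u+v)*s m + v*s (S m) < 0)%Z -> ((u+v)*s (S m) + v*s (S (S m)) <= 0)%Z -> (0 < X1)%Z ->
  IZR X1 ^2 < 6561/10000 * phi^n ->
  exists a : nat -> Z,
    trib_rec a n /\ a n = 0%Z /\ (a 1%nat > 0)%Z /\ (a 2%nat <= 0)%Z /\
    (a 3%nat < 0)%Z /\ IZR (a 1%nat) < 81 / 100 * Rpower phi (INR n / 2).
Proof.
  intros En EX H3 H2 H1 Hb. exists (seqB u v n).
  destruct (Rpow_facts phi n hp) as [hX hX2].
  assert (A1 : seqB u v n 1 = X1) by (rewrite EX; unfold seqB; subst n; f_equal; f_equal; f_equal; simpl; lia).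
  assert (A2 : seqB u v n 2 = ((u+v)*s (S m) + v*s (S (S m)))%Z) by (unfold seqB; subst n; f_equal; f_equal; f_equal; simpl; lia).
  assert (A3 : seqB u v n 3 = ((u+v)*s m + v*s (S m))%Z) by (unfold seqB; subst n; f_equal; f_equal; f_equal; simpl; lia).
  split; [apply seqB_rec|]. split; [apply seqB_n|].
  rewrite A1, A2, A3. split; [lia|]. split; [lia|]. split; [lia|].
  apply lt_from_sq; [exact hX|lra|]. rewrite hX2. lra.
Qed.

Lemma packB (phi : R) (hp : 0 < phi) (n m : nat) (u v X2 : Z) : n = S (S (S m)) ->
  X2 = ((u+v)*s (S m) + v*s (S (S m)))%Z ->
  ((u+v)*s m + v*s (S m) < 0)%Z -> (0 < X2)%Z -> ((u+v)*s (S (S m)) + v*s (S (S (S m))) <= 0)%Z ->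
  IZR X2 ^2 < 4096/10000 * phi^n ->
  exists b : nat -> Z,
    trib_rec b n /\ b n = 0%Z /\ (b 2%nat > 0)%Z /\ (b 1%nat <= 0)%Z /\
    (b 3%nat < 0)%Z /\ IZR (b 2%nat) < 64 / 100 * Rpower phi (INR n / 2).
Proof.
  intros En EX H3 H2 H1 Hb. exists (seqB u v n).
  destruct (Rpow_facts phi n hp) as [hX hX2].
  assert (A1 : seqB u v n 1 = ((u+v)*s (S (S m)) + v*s (S (S (S m))))%Z) by (unfold seqB; subst n; f_equal; f_equal; f_equal; simpl; lia).
  assert (A2 : seqB u v n 2 = X2) by (rewrite EX; unfold seqB; subst n; f_equal; f_equal; f_equal; simpl; lia).
  assert (A3 : seqB u v n 3 = ((u+v)*s m + v*s (S m))%Z) by (unfold seqB; subst n; f_equal; f_equal; f_equal; simpl; lia).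
  split; [apply seqB_rec|]. split; [apply seqB_n|].
  rewrite A1, A2, A3. split; [lia|]. split; [lia|]. split; [lia|].
  apply lt_from_sq; [exact hX|lra|]. rewrite hX2. lra.
Qed.

Lemma near_plane (phi : R) (h : is_trib_root phi) (m : nat) (hm : (5 <= m)%nat) :
  let a := IZR (s m) in let b := IZR (s (S m)) in let c := IZR (s (S (S m))) in
  1 <= Rabs a + Rabs b /\
  Rabs (c + 18393/10000*a + 15437/10000*b) <= 1/20 * (Rabs a + Rabs b).
Proof.
  intros a b c.
  destruct (phi_bounds phi h) as [h1 h2].
  destruct (big_facts phi h m hm) as [hm1 hm2].
  pose proof (L_s phi h m) as HL. fold a b c in HL.
  assert (hi : 0 < / phi^m <= 1/21).
  { split. apply Rinv_0_lt_compat; lra.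
    assert (/ phi^m <= / 21) by (apply Rinv_le_contravar; lra). lra. }
  assert (Hab : 1 <= Rabs a + Rabs b).
  { destruct (Z.eq_dec (s m) 0) as [E1|E1]; destruct (Z.eq_dec (s (S m)) 0) as [E2|E2].
    - exfalso. unfold Lf in HL. unfold a, b in HL. rewrite E1, E2 in HL.
      assert (Hc : c = / phi ^ m) by lra.
      unfold c in Hc.
      assert (0 < s (S (S m)))%Z by (apply lt_IZR; lra).
      assert (1 <= IZR (s (S (S m)))) by (apply IZR_le; lia). lra.
    - pose proof (IZR_abs_ge1 _ E2). pose proof (Rabs_pos a). fold b in H. lra.
    - pose proof (IZR_abs_ge1 _ E1). pose proof (Rabs_pos b). fold a in H. lra.
    - pose proof (IZR_abs_ge1 _ E1). pose proof (Rabs_pos b). fold a in H. lra. }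
  split; [exact Hab|].
  apply (eps_bound (Lf phi a b c) (phi - 18393/10000) (phi^2 - phi - 15437/10000)).
  - unfold Lf; ring.
  - rewrite HL, Rabs_pos_eq; lra.
  - apply Rabs_le; lra.
  - apply Rabs_le. assert (33826/10000 < phi^2 < 33831/10000) by (split; nra). lra.
  - exact Hab.
Qed.

Ltac caseA phi h m hm5 hp n En u v f1 f2 f3 sg H num :=
  let X3 := fresh "X3" in let X2 := fresh "X2" in let X1 := fresh "X1" in let Hb := fresh "Hb" in
  destruct (finishA phi h m hm5 u v f1 f2 f3 sg H ltac:(intros; ring) ltac:(ring) num)
    as [X3 [X2 [X1 Hb]]];
  apply (packA phi hp n m u v _ En eq_refl X3 X2 X1); rewrite En; exact Hb.

Ltac caseB phi h m hm5 hp n En u v f1 f2 f3 sg H num :=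
  let X3 := fresh "X3" in let X2 := fresh "X2" in let X1 := fresh "X1" in let Hb := fresh "Hb" in
  destruct (finishB phi h m hm5 u v f1 f2 f3 sg H ltac:(intros; ring) ltac:(ring) num)
    as [X3 [X2 [X1 Hb]]];
  apply (packB phi hp n m u v _ En eq_refl X3 X2 X1); rewrite En; exact Hb.

Lemma bigA (phi : R) (h : is_trib_root phi) (n : nat) : (8 <= n)%nat ->
  exists a : nat -> Z,
    trib_rec a n /\ a n = 0%Z /\ (a 1%nat > 0)%Z /\ (a 2%nat <= 0)%Z /\
    (a 3%nat < 0)%Z /\ IZR (a 1%nat) < 81 / 100 * Rpower phi (INR n / 2).
Proof.
  intro hn. pose proof (phi_bounds phi h) as hb. assert (hp : 0 < phi) by lra.
  set (m := (n - 3)%nat). assert (En : n = S (S (S m))) by (unfold m; lia).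
  assert (hm5 : (5 <= m)%nat) by (unfold m; lia).
  destruct (near_plane phi h m hm5) as [H1 H2].
  destruct (cover_A _ _ _ H1 H2) as [H|[H|[H|[H|[H|[H|[H|H]]]]]]].
  - caseA phi h m hm5 hp n En 1%Z 0%Z 0 0 1 1 H (numA_c phi hb).
  - caseA phi h m hm5 hp n En (-1)%Z 0%Z 0 0 1 (-1) H (numA_c phi hb).
  - caseA phi h m hm5 hp n En 0%Z 1%Z 1 (-1) 0 1 H (numA_amb phi hb).
  - caseA phi h m hm5 hp n En 0%Z (-1)%Z 1 (-1) 0 (-1) H (numA_amb phi hb).
  - caseA phi h m hm5 hp n En 1%Z 1%Z 1 (-1) 1 1 H (numA_ambpc phi hb).
  - caseA phi h m hm5 hp n En (-1)%Z (-1)%Z 1 (-1) 1 (-1) H (numA_ambpc phi hb).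
  - caseA phi h m hm5 hp n En 1%Z (-1)%Z 1 (-1) (-1) (-1) H (numA_ambmc phi hb).
  - caseA phi h m hm5 hp n En (-1)%Z 1%Z 1 (-1) (-1) 1 H (numA_ambmc phi hb).
Qed.

Lemma bigB (phi : R) (h : is_trib_root phi) (n : nat) : (8 <= n)%nat ->
  exists b : nat -> Z,
    trib_rec b n /\ b n = 0%Z /\ (b 2%nat > 0)%Z /\ (b 1%nat <= 0)%Z /\
    (b 3%nat < 0)%Z /\ IZR (b 2%nat) < 64 / 100 * Rpower phi (INR n / 2).
Proof.
  intro hn. pose proof (phi_bounds phi h) as hb. assert (hp : 0 < phi) by lra.
  set (m := (n - 3)%nat). assert (En : n = S (S (S m))) by (unfold m; lia).
  assert (hm5 : (5 <= m)%nat) by (unfold m; lia).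
  destruct (near_plane phi h m hm5) as [H1 H2].
  destruct (cover_B _ _ _ H1 H2) as [H|[H|[H|[H|[H|[H|[H|H]]]]]]].
  - caseB phi h m hm5 hp n En 1%Z 0%Z 0 1 0 1 H (numB_b phi hb).
  - caseB phi h m hm5 hp n En (-1)%Z 0%Z 0 1 0 (-1) H (numB_b phi hb).
  - caseB phi h m hm5 hp n En 0%Z 1%Z 0 1 1 1 H (numB_bpc phi hb).
  - caseB phi h m hm5 hp n En 0%Z (-1)%Z 0 1 1 (-1) H (numB_bpc phi hb).
  - caseB phi h m hm5 hp n En 1%Z 1%Z 0 2 1 1 H (numB_tbpc phi hb).
  - caseB phi h m hm5 hp n En (-1)%Z (-1)%Z 0 2 1 (-1) H (numB_tbpc phi hb).
  - caseB phi h m hm5 hp n En 1%Z (-1)%Z 0 0 1 (-1) H (numB_c phi hb).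
  - caseB phi h m hm5 hp n En (-1)%Z 1%Z 0 0 1 1 H (numB_c phi hb).
Qed.

Lemma pow_low (phi : R) (h : is_trib_root phi) (n : nat) : (18392/10000)^n <= phi^n.
Proof. destruct (phi_bounds phi h). apply pow_incr; lra. Qed.

Ltac zc := vm_compute; first [reflexivity | intro; discriminate].

Ltac smallA phi h hp m u v X :=
  apply (packA phi hp _ m u v X eq_refl ltac:(reflexivity) ltac:(zc) ltac:(zc) ltac:(zc));
  let H := fresh in pose proof (pow_low phi h (S (S (S m)))) as H; simpl in H |- *; lra.

Ltac smallB phi h hp m u v X :=
  apply (packB phi hp _ m u v X eq_refl ltac:(reflexivity) ltac:(zc) ltac:(zc) ltac:(zc));
  let H := fresh in pose proof (pow_low phi h (S (S (S m)))) as H; simpl in H |- *; lra.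

Theorem lemma5 (phi : R) (hphi : is_trib_root phi) :
  (forall n : nat, (4 <= n)%nat ->
     exists a : nat -> Z,
       trib_rec a n /\ a n = 0%Z /\ (a 1%nat > 0)%Z /\ (a 2%nat <= 0)%Z /\
       (a 3%nat < 0)%Z /\ IZR (a 1%nat) < 81 / 100 * Rpower phi (INR n / 2)) /\
  (forall n : nat, (4 <= n)%nat ->
     exists b : nat -> Z,
       trib_rec b n /\ b n = 0%Z /\ (b 2%nat > 0)%Z /\ (b 1%nat <= 0)%Z /\
       (b 3%nat < 0)%Z /\ IZR (b 2%nat) < 64 / 100 * Rpower phi (INR n / 2)).
Proof.
  pose proof (phi_bounds phi hphi) as hb. assert (hp : 0 < phi) by lra.
  split; intros n hn.
  - destruct (le_lt_dec 8 n) as [h8|h8]; [apply bigA; assumption|].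
    assert (Hc : (n = 4 \/ n = 5 \/ n = 6 \/ n = 7)%nat) by lia.
    destruct Hc as [-> | [-> | [-> | ->]]].
    + smallA phi hphi hp 1%nat 0%Z (-1)%Z 1%Z.
    + smallA phi hphi hp 2%nat (-1)%Z 1%Z 2%Z.
    + smallA phi hphi hp 3%nat 1%Z 0%Z 2%Z.
    + smallA phi hphi hp 4%nat (-1)%Z (-1)%Z 5%Z.
  - destruct (le_lt_dec 8 n) as [h8|h8]; [apply bigB; assumption|].
    assert (Hc : (n = 4 \/ n = 5 \/ n = 6 \/ n = 7)%nat) by lia.
    destruct Hc as [-> | [-> | [-> | ->]]].
    + smallB phi hphi hp 1%nat 1%Z (-1)%Z 1%Z.
    + smallB phi hphi hp 2%nat (-1)%Z 0%Z 1%Z.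
    + smallB phi hphi hp 3%nat 0%Z 1%Z 2%Z.
    + smallB phi hphi hp 4%nat 1%Z (-1)%Z 3%Z.
Qed.
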